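(* Let $\mathcal A$ be the category of all topological abelian groups with continuous homomorphisms, and let $\mathcal B$ be a reflective subcategory of $\mathcal A$. Then $\mathcal B$ has tensor product: for all $G,H\in\mathcal B$ there is a $\mathcal B$-tensor product $(G\otimes_{\mathcal B}H,\otimes_{\mathcal B})$. Furthermore, if $\mathcal B$ is epireflective, then $\otimes_{\mathcal B}:G\times H\to G\otimes_{\mathcal B}H$ is an epi-bihomomorphism, and for every continuous bihomomorphism $b:G\times H\to B$ with $B\in\mathcal B$ the continuous homomorphism $b^{\otimes_{\mathcal B}}:G\otimes_{\mathcal B}H\to B$ with $b^{\otimes_{\mathcal B}}\circ\otimes_{\mathcal B}=b$ is unique.
   Context: A continuous bihomomorphism $b:G\times H\to A$ is a map such that $x\mapsto b(x,h)$ and $y\mapsto b(g,y)$ are continuous homomorphisms for fixed $g,h$, and $b$ is continuous at $(0,0)$. For $G,H\in\mathcal B$, a $\mathcal B$-tensor product is a pair $(T,\otimes_{\mathcal B})$ with $T\in\mathcal B$ and $\otimes_{\mathcal B}:G\times H\to T$ a continuous bihomomorphism such that for every continuous bihomomorphism $b:G\times H\to B$ with $B\in\mathcal B$ there exists a continuous homomorphism $\tilde b:T\to B$ with $\tilde b\circ\otimes_{\mathcal B}=b$. $\mathcal B$ has tensor product if such a pair exists for all $G,H\in\mathcal B$. $\otimes_{\mathcal B}$ is an epi-bihomomorphism if any two group homomorphisms $h_1,h_2$ defined on $G\otimes_{\mathcal B}H$ with the same codomain and $h_1\circ\otimes_{\mathcal B}=h_2\circ\otimes_{\mathcal B}$ satisfy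 $h_1=h_2$. $\mathcal B\subseteq\mathcal A$ is reflective if for each $G\in\mathcal A$ there is a continuous homomorphism $r_{\mathcal B}:G\to r_{\mathcal B}G$ with $r_{\mathcal B}G\in\mathcal B$ such that every continuous homomorphism $h:G\to B$, $B\in\mathcal B$, factors as $h=h^r\circ r_{\mathcal B}$ for a unique continuous homomorphism $h^r:r_{\mathcal B}G\to B$; it is epireflective if moreover each $r_{\mathcal B}$ is an epimorphism. *)

(* Defs.v *)
From HB Require Import structures.
From mathcomp Require Import all_boot all_order all_algebra.
From mathcomp Require Import all_classical all_reals all_analysis.
Set Implicit Arguments. Unset Strict Implicit. Unset Printing Implicit Defensive.
Import Order.TTheory GRing.Theory Num.Theory.
Local Open Scope classical_set_scope.
Local Open Scope ring_scope.

(* Objects of the category A: topological abelian groups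
   (mathcomp-analysis' [topologicalZmodType]: Zmodule + topology with
   continuous addition and opposite).  A (full) subcategory B of A is
   given by a predicate on objects. *)
Definition subcat := topologicalZmodType -> Prop.

Definition grp_hom (M N : zmodType) (f : M -> N) : Prop :=
  forall x y, f (x + y) = f x + f y.

Definition cont_hom (G K : topologicalZmodType) (f : G -> K) : Prop :=
  grp_hom f /\ continuous f.

Definition cont_bihom (G H K : topologicalZmodType) (b : G -> H -> K) : Prop :=
  (forall h : H, cont_hom (fun x : G => b x h)) /\
  (forall g : G, cont_hom (b g)) /\
  {for (0, 0), continuous (fun p : G * H => b p.1 p.2)}.

Definition is_tensor (B : subcat) (G H T : topologicalZmodType)
  (t : G -> H -> T) : Prop :=
  B T /\ cont_bihom t /\
  forall (C : topologicalZmodType), B C ->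
    forall b : G -> H -> C, cont_bihom b ->
      exists bt : T -> C, cont_hom bt /\ forall g h, bt (t g h) = b g h.

Arguments is_tensor : clear implicits.

Definition has_tensor (B : subcat) : Prop :=
  forall G H : topologicalZmodType, B G -> B H ->
    exists (T : topologicalZmodType) (t : G -> H -> T), is_tensor B G H T t.

Definition epi_bihom {G H T : topologicalZmodType} (t : G -> H -> T) : Prop :=
  forall (M : zmodType) (h1 h2 : T -> M), grp_hom h1 -> grp_hom h2 ->
    (forall g h, h1 (t g h) = h2 (t g h)) -> h1 = h2.

Definition is_reflection (B : subcat) (G R : topologicalZmodType)
  (r : G -> R) : Prop :=
  B R /\ cont_hom r /\
  forall (C : topologicalZmodType), B C -> forall h : G -> C, cont_hom h ->
    exists hr : R -> C, (cont_hom hr /\ forall x, hr (r x) = h x) /\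
      forall hr' : R -> C, cont_hom hr' -> (forall x, hr' (r x) = h x) -> hr' = hr.

Arguments is_reflection : clear implicits.

Definition epi_A {G R : topologicalZmodType} (r : G -> R) : Prop :=
  forall (C : topologicalZmodType) (h1 h2 : R -> C), cont_hom h1 -> cont_hom h2 ->
    (forall x, h1 (r x) = h2 (r x)) -> h1 = h2.

Definition reflective (B : subcat) : Prop :=
  forall G : topologicalZmodType, exists (R : topologicalZmodType) (r : G -> R),
    is_reflection B G R r.

Definition epireflective (B : subcat) : Prop :=
  forall G : topologicalZmodType, exists (R : topologicalZmodType) (r : G -> R),
    is_reflection B G R r /\ epi_A r.

(* Main.v *)
From HB Require Import structures.
Require Import Defs.
From mathcomp Require Import all_boot all_order all_algebra.
From mathcomp Require Import all_classical all_reals all_analysis.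
Set Implicit Arguments. Unset Strict Implicit. Unset Printing Implicit Defensive.
Import Order.TTheory GRing.Theory Num.Theory.
Local Open Scope classical_set_scope.
Local Open Scope ring_scope.
Local Open Scope quotient_scope.

Lemma nbhs_prodP (X Y : topologicalType) (x : X) (y : Y) (S : set (X * Y)) :
  nbhs (x, y) S <-> exists U V, nbhs x U /\ nbhs y V /\
    (forall a b, U a -> V b -> S (a, b)).
Proof.
split.
  case=> [[U V]] /= [hU hV] sub; exists U, V; split => //; split => // a b Ua Vb.
  by apply: sub.
move=> [U [V [hU [hV sub]]]]; exists (U, V) => //= [[a b]] [/= Ua Vb]; exact: sub.
Qed.

Section ProdTop.
Variables (A B : topologicalZmodType).

Lemma prod_sub_continuous : continuous (fun x : (A * B) * (A * B) => x.1 - x.2).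
Proof.
move=> [[a1 b1] [a2 b2]] U /= /nbhs_prodP [U1 [U2 [hU1 [hU2 sU]]]].
have /nbhs_prodP [P1 [Q1 [hP1 [hQ1 s1]]]] :=
  @sub_continuous A (a1, a2) U1 hU1.
have /nbhs_prodP [P2 [Q2 [hP2 [hQ2 s2]]]] :=
  @sub_continuous B (b1, b2) U2 hU2.
apply/nbhs_prodP; exists (P1 `*` P2), (Q1 `*` Q2); split.
  by apply/nbhs_prodP; exists P1, P2; split => //; split => // ? ? ? ?; split.
split.
  by apply/nbhs_prodP; exists Q1, Q2; split => //; split => // ? ? ? ?; split.
move=> [x1 y1] [x2 y2] [/= Px1 Py1] [/= Qx2 Qy2].
exact: (sU _ _ (s1 _ _ Px1 Qx2) (s2 _ _ Py1 Qy2)).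
Qed.

Definition prodTZ : Type := (A * B)%type.
HB.instance Definition _ := GRing.Zmodule.on prodTZ.
HB.instance Definition _ := Topological.on prodTZ.
HB.instance Definition _ :=
  PreTopologicalNmodule_isTopologicalZmodule.Build prodTZ prod_sub_continuous.
End ProdTop.

Section Indisc.
Variable M : zmodType.
Definition indisc : Type := M.
HB.instance Definition _ := GRing.Zmodule.on indisc.
Definition indisc_nbhs (x : indisc) : set_system indisc := [set U | U = setT].
HB.instance Definition _ := hasNbhs.Build indisc indisc_nbhs.

Lemma indisc_filter (p : indisc) : ProperFilter (nbhs p).
Proof.
split.
  rewrite /nbhs /= /indisc_nbhs /= => h.
  have : (setT : set indisc) p by [].
  by rewrite -h.
split.
- by [].
- by move=> P Q; rewrite /nbhs /= /indisc_nbhs /= => -> ->; rewrite setIT.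
- move=> P Q PQ; rewrite /nbhs /= /indisc_nbhs /= => hP.
  by apply/seteqP; split => // x _; apply: PQ; rewrite hP.
Qed.

Lemma indisc_singleton (p : indisc) (A : set indisc) : nbhs p A -> A p.
Proof. by rewrite /nbhs /= /indisc_nbhs /= => ->. Qed.

Lemma indisc_nbhs_nbhs (p : indisc) (A : set indisc) :
  nbhs p A -> nbhs p (nbhs^~ A).
Proof.
rewrite /nbhs /= /indisc_nbhs /= => hA.
by apply/seteqP; split => // x _.
Qed.

HB.instance Definition _ := Nbhs_isNbhsTopological.Build indisc
  indisc_filter indisc_singleton indisc_nbhs_nbhs.

Lemma indisc_continuous (X : topologicalType) (f : X -> indisc) : continuous f.
Proof.
move=> x U; rewrite /nbhs /= /indisc_nbhs /= => ->.
exact: filterT.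
Qed.

HB.instance Definition _ :=
  PreTopologicalNmodule_isTopologicalZmodule.Build indisc
    (@indisc_continuous _ (fun x : indisc * indisc => x.1 - x.2)).
End Indisc.



Lemma grp_hom0 (M N : zmodType) (f : M -> N) : grp_hom f -> f 0 = 0.
Proof.
move=> hf; have := hf 0 0; rewrite addr0 => /eqP.
by rewrite -subr_eq subrr eq_sym => /eqP.
Qed.

Lemma grp_homN (M N : zmodType) (f : M -> N) : grp_hom f -> forall x, f (- x) = - f x.
Proof.
move=> hf x; have := hf (- x) x; rewrite addNr (grp_hom0 hf) => /eqP.
by rewrite eq_sym addr_eq0 => /eqP.
Qed.

Section Tensor.
Variables G H : topologicalZmodType.
Definition tS := seq (bool * (G * H)).
Definition evalb (C : zmodType) (b : G -> H -> C) (s : tS) : C :=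
  \sum_(a <- s) (if a.1 then - b a.2.1 a.2.2 else b a.2.1 a.2.2).
Definition alg_bihom (C : zmodType) (b : G -> H -> C) :=
  (forall h, grp_hom (fun x => b x h)) /\ (forall g, grp_hom (b g)).
Definition eqvP (s1 s2 : tS) : Prop :=
  forall (C : zmodType) (b : G -> H -> C), alg_bihom b -> evalb b s1 = evalb b s2.
Definition eqv (s1 s2 : tS) : bool := `[< eqvP s1 s2 >].

Lemma eqv_refl : reflexive eqv.
Proof. by move=> s; apply/asboolP. Qed.
Lemma eqv_sym : symmetric eqv.
Proof.
move=> s1 s2; apply/asboolP/asboolP => h C b hb; by rewrite h.
Qed.
Lemma eqv_trans : transitive eqv.
Proof.
move=> s2 s1 s3 /asboolP h12 /asboolP h23; apply/asboolP => C b hb.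
by rewrite h12 // h23.
Qed.
Definition eqvr := EquivRel eqv eqv_refl eqv_sym eqv_trans.
Definition tQ := {eq_quot eqvr}.
Definition Tns : Type := tQ.
HB.instance Definition _ := Choice.on Tns.
Definition tpi (s : tS) : Tns := \pi_tQ s.
Definition trep (x : Tns) : tS := repr (x : tQ).

Lemma tpi_rep x : tpi (trep x) = x.
Proof. exact: reprK. Qed.

Lemma pi_eq s1 s2 : eqvP s1 s2 -> tpi s1 = tpi s2.
Proof. by move=> h; apply/eqmodP; apply/asboolP. Qed.

Lemma rep_pi s : eqvP (trep (tpi s)) s.
Proof.
have : eqvr (trep (tpi s)) s by apply/eqmodP; rewrite /trep /tpi reprK.
by move/asboolP.
Qed.

Definition tlift (C : zmodType) (b : G -> H -> C) (x : Tns) : C := evalb b (trep x).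

Lemma lift_pi (C : zmodType) (b : G -> H -> C) s :
  alg_bihom b -> tlift b (tpi s) = evalb b s.
Proof. move=> hb; exact: rep_pi. Qed.

Lemma T_ext x y :
  (forall (C : zmodType) (b : G -> H -> C), alg_bihom b -> tlift b x = tlift b y) ->
  x = y.
Proof. by move=> h; rewrite -(tpi_rep x) -(tpi_rep y); apply: pi_eq. Qed.

Definition tflip (a : bool * (G * H)) := (~~ a.1, a.2).

Lemma evalb_cat (C : zmodType) (b : G -> H -> C) s1 s2 :
  evalb b (s1 ++ s2) = evalb b s1 + evalb b s2.
Proof. by rewrite /evalb big_cat. Qed.

Lemma evalb_flip (C : zmodType) (b : G -> H -> C) s :
  evalb b (map tflip s) = - evalb b s.
Proof.
rewrite /evalb big_map -sumrN; apply: eq_bigr => -[[] [g h]] _ //=.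
by rewrite opprK.
Qed.

Lemma evalb_nil (C : zmodType) (b : G -> H -> C) : evalb b [::] = 0.
Proof. by rewrite /evalb big_nil. Qed.

Definition tadd (x y : Tns) : Tns := tpi (trep x ++ trep y).
Definition topp (x : Tns) : Tns := tpi (map tflip (trep x)).
Definition tzero : Tns := tpi [::].

Lemma lift_add0 (C : zmodType) (b : G -> H -> C) x y :
  alg_bihom b -> tlift b (tadd x y) = tlift b x + tlift b y.
Proof. by move=> hb; rewrite /tadd lift_pi // evalb_cat. Qed.
Lemma lift_opp0 (C : zmodType) (b : G -> H -> C) x :
  alg_bihom b -> tlift b (topp x) = - tlift b x.
Proof. by move=> hb; rewrite /topp lift_pi // evalb_flip. Qed.
Lemma lift_zero0 (C : zmodType) (b : G -> H -> C) :
  alg_bihom b -> tlift b tzero = 0.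
Proof. by move=> hb; rewrite /tzero lift_pi // evalb_nil. Qed.

Lemma taddA : associative tadd.
Proof. by move=> x y z; apply: T_ext => C b hb; rewrite !lift_add0 // addrA. Qed.
Lemma taddC : commutative tadd.
Proof. by move=> x y; apply: T_ext => C b hb; rewrite !lift_add0 // addrC. Qed.
Lemma tadd0 : left_id tzero tadd.
Proof. by move=> x; apply: T_ext => C b hb; rewrite !lift_add0 // lift_zero0 // add0r. Qed.
Lemma taddN : left_inverse tzero topp tadd.
Proof.
by move=> x; apply: T_ext => C b hb; rewrite !lift_add0 // lift_opp0 // lift_zero0 // addNr.
Qed.

HB.instance Definition _ := GRing.isZmodule.Build Tns taddA taddC tadd0 taddN.

Lemma lift_add (C : zmodType) (b : G -> H -> C) (x y : Tns) :
  alg_bihom b -> tlift b (x + y) = tlift b x + tlift b y.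
Proof. exact: lift_add0. Qed.
Lemma lift_opp (C : zmodType) (b : G -> H -> C) (x : Tns) :
  alg_bihom b -> tlift b (- x) = - tlift b x.
Proof. exact: lift_opp0. Qed.

Lemma lift_hom (C : zmodType) (b : G -> H -> C) :
  alg_bihom b -> grp_hom (tlift b).
Proof. by move=> hb x y; rewrite lift_add. Qed.

Definition tns (g : G) (h : H) : Tns := tpi [:: (false, (g, h))].

Lemma lift_t (C : zmodType) (b : G -> H -> C) g h :
  alg_bihom b -> tlift b (tns g h) = b g h.
Proof. by move=> hb; rewrite /tns lift_pi // /evalb big_seq1. Qed.

Lemma t_alg : alg_bihom tns.
Proof.
split=> [h x y|g x y]; apply: T_ext => C b hb; rewrite lift_add // !lift_t //.
  by case: hb => /(_ h) ->.
by case: hb => _ /(_ g) ->.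
Qed.

Lemma T_gen (M : zmodType) (f1 f2 : Tns -> M) : grp_hom f1 -> grp_hom f2 ->
  (forall g h, f1 (tns g h) = f2 (tns g h)) -> f1 = f2.
Proof.
move=> h1 h2 e; apply: funext => x; rewrite -(tpi_rep x).
elim: (trep x) => [|[s [g h]] l IH].
  by rewrite -[tpi [::]]/(0 : Tns) !grp_hom0.
have -> : tpi ((s, (g, h)) :: l) = (if s then - tns g h else tns g h) + tpi l.
  apply: T_ext => C b hb; rewrite lift_add // !lift_pi //.
  case: s; rewrite ?lift_opp ?lift_t //.
    by rewrite /evalb big_cons.
  by rewrite /evalb big_cons.
rewrite h1 h2 IH; case: s; rewrite ?(grp_homN h1) ?(grp_homN h2) e //.
Qed.
End Tensor.


Section TensorTop.
Variables G H : topologicalZmodType.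
Local Notation Tns := (Tns G H).

Lemma cb_alg (C : topologicalZmodType) (b : G -> H -> C) :
  cont_bihom b -> alg_bihom b.
Proof. by case=> h1 [h2 _]; split => [h|g]; [case: (h1 h)|case: (h2 g)]. Qed.

Definition nbhsT (x : Tns) : set_system Tns :=
  [set U | exists (C : topologicalZmodType) (b : G -> H -> C), cont_bihom b /\
     exists V, nbhs (tlift b x) V /\ (forall y, V (tlift b y) -> U y)].

HB.instance Definition _ := hasNbhs.Build Tns nbhsT.

Lemma zero_cb : cont_bihom (fun (_ : G) (_ : H) => (0 : G)).
Proof.
split; [|split].
- by move=> h; split; [move=> x y; rewrite addr0|exact: cst_continuous].
- by move=> g; split; [move=> x y; rewrite addr0|exact: cst_continuous].
- exact: cst_continuous.
Qed.

Lemma pair_cont (X : topologicalType) (C1 C2 : topologicalZmodType)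
  (f1 : X -> C1) (f2 : X -> C2) x :
  {for x, continuous f1} -> {for x, continuous f2} ->
  {for x, continuous (fun y => ((f1 y, f2 y) : prodTZ C1 C2))}.
Proof.
move=> c1 c2 U /nbhs_prodP [U1 [U2 [h1 [h2 s]]]].
have n1 := c1 U1 h1; have n2 := c2 U2 h2.
have : nbhs x (f1 @^-1` U1 `&` f2 @^-1` U2) by apply: filterI.
by apply: filterS => y [/= a b]; apply: s.
Qed.

Lemma pair_cb (C1 C2 : topologicalZmodType) (b1 : G -> H -> C1) (b2 : G -> H -> C2) :
  cont_bihom b1 -> cont_bihom b2 ->
  cont_bihom (fun g h => ((b1 g h, b2 g h) : prodTZ C1 C2)).
Proof.
move=> [h1 [g1 j1]] [h2 [g2 j2]]; split; [|split].
- move=> h; case: (h1 h) => a1 c1; case: (h2 h) => a2 c2; split.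
    by move=> x y; rewrite a1 a2.
  by move=> x; apply: pair_cont; [exact: c1|exact: c2].
- move=> g; case: (g1 g) => a1 c1; case: (g2 g) => a2 c2; split.
    by move=> x y; rewrite a1 a2.
  by move=> x; apply: pair_cont; [exact: c1|exact: c2].
- exact: (pair_cont j1 j2).
Qed.

Lemma lift_pair (C1 C2 : topologicalZmodType) (b1 : G -> H -> C1) (b2 : G -> H -> C2) x :
  tlift (fun g h => ((b1 g h, b2 g h) : prodTZ C1 C2)) x = (tlift b1 x, tlift b2 x).
Proof.
rewrite /tlift /evalb; elim: (trep x) => [|a s IH]; first by rewrite !big_nil.
by rewrite !big_cons IH; case: a.1.
Qed.

Lemma nbhsT_filter (p : Tns) : ProperFilter (nbhs p).
Proof.
split.
  move=> [C [b [hb [V [hV sV]]]]]; exact: (sV _ (nbhs_singleton hV)).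
split.
- exists G, (fun _ _ => 0); split; first exact: zero_cb.
  by exists setT; split => //; exact: filterT.
- move=> P1 P2 [C1 [b1 [hb1 [V1 [hV1 s1]]]]] [C2 [b2 [hb2 [V2 [hV2 s2]]]]].
  exists (prodTZ C1 C2), (fun g h => ((b1 g h, b2 g h) : prodTZ C1 C2)).
  split; first exact: pair_cb.
  exists (V1 `*` V2); split.
    rewrite lift_pair; apply/nbhs_prodP; exists V1, V2; split => //; split => //.
  by move=> y; rewrite lift_pair => -[/= ? ?]; split; [apply: s1|apply: s2].
- move=> P1 P2 sP [C [b [hb [V [hV sV]]]]].
  by exists C, b; split => //; exists V; split => // y /sV /sP.
Qed.

Lemma nbhsT_singleton (p : Tns) (A : set Tns) : nbhs p A -> A p.
Proof. move=> [C [b [hb [V [hV sV]]]]]; exact: (sV _ (nbhs_singleton hV)). Qed.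

Lemma nbhsT_nbhs (p : Tns) (A : set Tns) : nbhs p A -> nbhs p (nbhs^~ A).
Proof.
move=> [C [b [hb [V [hV sV]]]]]; exists C, b; split => //.
exists (nbhs^~ V); split; first exact: nbhs_interior.
by move=> y hy; exists C, b; split => //; exists V.
Qed.

HB.instance Definition _ := Nbhs_isNbhsTopological.Build Tns
  nbhsT_filter nbhsT_singleton nbhsT_nbhs.

Lemma T_sub_continuous : continuous (fun x : Tns * Tns => x.1 - x.2).
Proof.
move=> [x1 x2] U [C [b [hb [V [hV sV]]]]].
have hal := cb_alg hb.
have hV' : nbhs (tlift b x1, tlift b x2) [set c : C * C | V (c.1 - c.2)].
  move: hV; rewrite /= lift_add // lift_opp // => hV.
  exact: (@sub_continuous C (tlift b x1, tlift b x2) V hV).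
move/nbhs_prodP: hV' => [A1 [A2 [hA1 [hA2 sA]]]].
apply/nbhs_prodP; exists [set y | A1 (tlift b y)], [set y | A2 (tlift b y)].
split; first by exists C, b; split => //; exists A1.
split; first by exists C, b; split => //; exists A2.
move=> y1 y2 a1 a2; apply: sV; rewrite lift_add // lift_opp //.
exact: (sA _ _ a1 a2).
Qed.

HB.instance Definition _ :=
  PreTopologicalNmodule_isTopologicalZmodule.Build Tns T_sub_continuous.

Definition TT : topologicalZmodType := Tns.

Lemma lift_cont (C : topologicalZmodType) (b : G -> H -> C) :
  cont_bihom b -> cont_hom (tlift b : TT -> C).
Proof.
move=> hb; split; first exact: lift_hom (cb_alg hb).
move=> x V hV; exists C, b; split => //; exists V; split => //.
Qed.

Lemma t_cont : cont_bihom (@tns G H : G -> H -> TT).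
Proof.
have [ta1 ta2] := @t_alg G H.
split; [|split].
- move=> h; split; first exact: ta1.
  move=> x U [C [b [hb [V [hV sV]]]]].
  rewrite lift_t in hV; last exact: cb_alg.
  change (nbhs x [set y | U (tns y h)]).
  have hn : nbhs x [set y | V (b y h)] := (hb.1 h).2 x V hV.
  apply: (filterS _ hn) => y hy; apply: sV; rewrite lift_t //; exact: cb_alg.
- move=> g; split; first exact: ta2.
  move=> x U [C [b [hb [V [hV sV]]]]].
  rewrite lift_t in hV; last exact: cb_alg.
  change (nbhs x [set y | U (tns g y)]).
  have hn : nbhs x [set y | V (b g y)] := (hb.2.1 g).2 x V hV.
  apply: (filterS _ hn) => y hy; apply: sV; rewrite lift_t //; exact: cb_alg.
- move=> U [C [b [hb [V [hV sV]]]]].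
  rewrite lift_t in hV; last exact: cb_alg.
  change (nbhs ((0 : G), (0 : H)) [set y | U (tns y.1 y.2)]).
  have hn : nbhs ((0 : G), (0 : H)) [set y | V (b y.1 y.2)] := hb.2.2 V hV.
  apply: (filterS _ hn) => y hy; apply: sV; rewrite lift_t //; exact: cb_alg.
Qed.
End TensorTop.


Lemma comp_ch (X Y Z : topologicalZmodType) (f : X -> Y) (g : Y -> Z) :
  cont_hom f -> cont_hom g -> cont_hom (fun x => g (f x)).
Proof.
move=> [af cf] [ag cg]; split; first by move=> x y; rewrite af ag.
move=> x U hU; exact: (cf x _ (cg (f x) U hU)).
Qed.

Lemma comp_cb (G H K L : topologicalZmodType) (t : G -> H -> K) (r : K -> L) :
  cont_hom r -> cont_bihom t -> cont_bihom (fun g h => r (t g h)).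
Proof.
move=> hr [h1 [h2 j]]; split; [|split].
- by move=> h; apply: (comp_ch (h1 h) hr).
- by move=> g; apply: (comp_ch (h2 g) hr).
- move=> U hU; exact: (j _ (hr.2 _ U hU)).
Qed.

Section Main.
Variables (B : subcat) (G H : topologicalZmodType).

Lemma refl_tensor (R : topologicalZmodType) (r : TT G H -> R) :
  is_reflection B (TT G H) R r -> is_tensor B G H R (fun g h => r (tns g h)).
Proof.
move=> [hBR [hr univ]]; split => //; split; first exact: comp_cb (t_cont G H).
move=> C hC b hb.
have [hr0 [[hc heq] _]] := univ C hC _ (lift_cont hb).
exists hr0; split => // g h; rewrite heq lift_t //; exact: cb_alg.
Qed.

Lemma refl_unique (R : topologicalZmodType) (r : TT G H -> R) :
  is_reflection B (TT G H) R r ->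
  forall (C : topologicalZmodType), B C ->
    forall b : G -> H -> C, cont_bihom b ->
      forall bt1 bt2 : R -> C, cont_hom bt1 -> cont_hom bt2 ->
        (forall g h, bt1 (r (tns g h)) = b g h) ->
        (forall g h, bt2 (r (tns g h)) = b g h) -> bt1 = bt2.
Proof.
move=> [hBR [hr univ]] C hC b hb bt1 bt2 c1 c2 e1 e2.
have c1r := comp_ch hr c1; have c2r := comp_ch hr c2.
have E : (fun x : TT G H => bt1 (r x)) = (fun x => bt2 (r x)).
  apply: T_gen; [exact: c1r.1|exact: c2r.1|by move=> g h; rewrite e1 e2].
have [hr0 [_ uniq]] := univ C hC _ c1r.
rewrite (uniq bt1 c1) //; apply/esym; apply: uniq => // x.
by have := congr1 (fun f => f x) E.
Qed.

Lemma epi_tensor (R : topologicalZmodType) (r : TT G H -> R) :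
  cont_hom r -> epi_A r -> epi_bihom (fun g h => r (tns g h)).
Proof.
move=> hr hepi M h1 h2 g1 g2 e.
have E : (fun x : TT G H => h1 (r x)) = (fun x => h2 (r x)).
  apply: T_gen => //.
  - by move=> x y; rewrite hr.1 g1.
  - by move=> x y; rewrite hr.1 g2.
apply: (hepi (indisc M) h1 h2).
- by split; [exact: g1|exact: indisc_continuous].
- by split; [exact: g2|exact: indisc_continuous].
- by move=> x; have := congr1 (fun f => f x) E.
Qed.
End Main.

Theorem proposition2p6 (B : subcat) :
  reflective B ->
  has_tensor B /\
  (forall G H : topologicalZmodType, B G -> B H ->
     exists (T : topologicalZmodType) (t : G -> H -> T),
       is_tensor B G H T t /\
       (epireflective B ->
          epi_bihom t /\
          forall (C : topologicalZmodType), B C ->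
            forall b : G -> H -> C, cont_bihom b ->
              forall bt1 bt2 : T -> C, cont_hom bt1 -> cont_hom bt2 ->
                (forall g h, bt1 (t g h) = b g h) ->
                (forall g h, bt2 (t g h) = b g h) -> bt1 = bt2)).
Proof.
move=> hrefl.
have main : forall G H : topologicalZmodType, B G -> B H ->
     exists (T : topologicalZmodType) (t : G -> H -> T),
       is_tensor B G H T t /\
       (epireflective B ->
          epi_bihom t /\
          forall (C : topologicalZmodType), B C ->
            forall b : G -> H -> C, cont_bihom b ->
              forall bt1 bt2 : T -> C, cont_hom bt1 -> cont_hom bt2 ->
                (forall g h, bt1 (t g h) = b g h) ->
                (forall g h, bt2 (t g h) = b g h) -> bt1 = bt2).
  move=> G H _ _.
  have [hE|hNE] := pselect (epireflective B).
    have [R [r [hr hepi]]] := hE (TT G H).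
    exists R, (fun g h => r (tns g h)); split; first exact: refl_tensor.
    move=> _; split; first exact: epi_tensor hr.2.1 hepi.
    exact: refl_unique hr.
  have [R [r hr]] := hrefl (TT G H).
  exists R, (fun g h => r (tns g h)); split; first exact: refl_tensor.
  by move=> /hNE.
split => // G H hG hH.
by have [T [t [ht _]]] := main G H hG hH; exists T, t.
Qed.
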